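(* Let $G$ be a looped simple graph and let $J$ be an independent set of some transverse matroid of $G$ (i.e. $J$ is a subtransversal of $W(G)$ independent in $M[IAS(G)]$). Then there is a looped simple graph $H$ locally equivalent to $G$ and an induced isomorphism $\beta:M[IAS(G)]\to M[IAS(H)]$ such that $\beta(J)\subseteq\Phi(H)=\{\phi_H(v):v\in V(H)\}$.
   Context: A looped simple graph is a finite graph in which each vertex carries at most one loop and no two distinct vertices are joined by more than one edge. ''Adjacent''/''neighbors'' refer only to distinct vertices joined by a non-loop edge; $N_G(v)$ is the set of neighbors of $v$. $A(G)$ is the $V(G)\times V(G)$ matrix over $GF(2)$ with diagonal entry $1$ exactly at looped vertices and off-diagonal entry $1$ exactly for adjacent pairs. $IAS(G)=(I\mid A(G)\mid A(G)+I)$ over $GF(2)$, rows indexed by $V(G)$; the $v$-columns of the three blocks are labelled $\phi_G(v),\chi_G(v),\psi_G(v)$. $M[IAS(G)]$ is the binary column matroid of $IAS(G)$ on $W(G)=\{\phi_G(v),\chi_G(v),\psi_G(v):v\in V(G)\}$. The vertex triple of $v$ is $\tau_G(v)=\{\phi_G(v),\chi_G(v),\psi_G(v)\}$. A subtransversal (transversal) meets each vertex triple in at most (exactly) one element; a transverse matroid of $G$ is the restriction of $M[IAS(G)]$ to a transversal. Local equivalence: $G_\ell^v$ complements the loop status of $v$; $G_s^v$ complements the adjacency status of every pair of distinct neighbors of $v$; $G_{ns}^v$ does this and also complements the loop status of every neighbor of $v$. $H$ is locally equivalent to $G$ if obtained from $G$ by a finite sequence of such operations. Induced isomorphisms: for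 each such operation producing $G'$ from $G$ there is a matroid isomorphism $M[IAS(G)]\to M[IAS(G')]$ sending $\alpha_G(x)\mapsto\alpha_{G'}(x)$ for all $\alpha\in\{\phi,\chi,\psi\}$, $x\in V(G)$, except: for $G'=G_\ell^v$, $\chi_G(v)\mapsto\psi_{G'}(v)$, $\psi_G(v)\mapsto\chi_{G'}(v)$; for $G'=G_{ns}^v$ with $v$ unlooped, $\phi_G(v)\mapsto\psi_{G'}(v)$, $\psi_G(v)\mapsto\phi_{G'}(v)$, and with $v$ looped, $\phi_G(v)\mapsto\chi_{G'}(v)$, $\chi_G(v)\mapsto\phi_{G'}(v)$; for $G'=G_s^v$, the same exchange at $v$ as for $G_{ns}^v$ and in addition, for every $w\in N_G(v)$, $\chi_G(w)\mapsto\psi_{G'}(w)$, $\psi_G(w)\mapsto\chi_{G'}(w)$. An induced isomorphism $M[IAS(G)]\to M[IAS(H)]$ is a composition of such isomorphisms along a sequence of operations transforming $G$ into $H$. *)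

(* Defs.v *)
From HB Require Import structures.
From mathcomp Require Import all_boot all_order all_algebra.
Set Implicit Arguments. Unset Strict Implicit. Unset Printing Implicit Defensive.
Import GRing.Theory.
Local Open Scope ring_scope.

Record lgraph (V : finType) := LGraph {
  ladj : V -> V -> bool;
  lloop : V -> bool;
  ladj_sym : forall x y, ladj x y = ladj y x;
  ladj_irr : forall x, ladj x x = false }.

Inductive kind := Phi | Chi | Psi.

Definition kind_to (k : kind) : 'I_3 :=
  match k with Phi => inord 0 | Chi => inord 1 | Psi => inord 2 end.
Definition kind_of (i : 'I_3) : kind :=
  match val i with 0%N => Phi | 1%N => Chi | _ => Psi end.
Lemma kind_toK : cancel kind_to kind_of.
Proof. by case; rewrite /kind_of /= inordK. Qed.
HB.instance Definition _ := Finite.copy kind (can_type kind_toK).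

(* W(G) : element (v, k) stands for k_G(v), e.g. (v, Phi) = phi_G(v). *)
Definition elt (V : finType) := (V * kind)%type.

Definition amat (V : finType) (G : lgraph V) (y x : V) : 'F_2 :=
  (if y == x then lloop G x else ladj G y x)%:R.

(* The column of IAS(G) labelled by w, as a function of the row index y. *)
Definition ias_col (V : finType) (G : lgraph V) (w : elt V) (y : V) : 'F_2 :=
  match w.2 with
  | Phi => (y == w.1)%:R
  | Chi => amat G y w.1
  | Psi => amat G y w.1 + (y == w.1)%:R
  end.

Definition ias_indep (V : finType) (G : lgraph V) (J : {set elt V}) : Prop :=
  forall c : elt V -> 'F_2,
    (forall y, \sum_(w in J) c w * ias_col G w y = 0) ->
    forall w, w \in J -> c w = 0.

Definition subtransversal (V : finType) (J : {set elt V}) : Prop :=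
  forall v : V, (#|[set w in J | w.1 == v]| <= 1)%N.

Inductive lop (V : Type) := Lop_l of V | Lop_s of V | Lop_ns of V.

Definition s_adj (V : finType) (G : lgraph V) (v : V) (x y : V) : bool :=
  ladj G x y (+) [&& x != y, ladj G v x & ladj G v y].

Lemma s_adj_sym (V : finType) (G : lgraph V) v x y : s_adj G v x y = s_adj G v y x.
Proof. by rewrite /s_adj (ladj_sym G x y) eq_sym (andbC (ladj G v x)). Qed.
Lemma s_adj_irr (V : finType) (G : lgraph V) v x : s_adj G v x x = false.
Proof. by rewrite /s_adj ladj_irr eqxx. Qed.
Lemma ladj_sym' (V : finType) (G : lgraph V) x y : ladj G x y = ladj G y x.
Proof. exact: ladj_sym. Qed.
Lemma ladj_irr' (V : finType) (G : lgraph V) x : ladj G x x = false.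
Proof. exact: ladj_irr. Qed.

Definition graph_l (V : finType) (G : lgraph V) (v : V) : lgraph V :=
  @LGraph V (ladj G) (fun x => if x == v then ~~ lloop G x else lloop G x)
    (ladj_sym' G) (ladj_irr' G).
Definition graph_s (V : finType) (G : lgraph V) (v : V) : lgraph V :=
  @LGraph V (s_adj G v) (lloop G) (s_adj_sym G v) (s_adj_irr G v).
Definition graph_ns (V : finType) (G : lgraph V) (v : V) : lgraph V :=
  @LGraph V (s_adj G v) (fun x => lloop G x (+) ladj G v x)
    (s_adj_sym G v) (s_adj_irr G v).

Definition apply_lop (V : finType) (o : lop V) (G : lgraph V) : lgraph V :=
  match o with
  | Lop_l v => graph_l G v
  | Lop_s v => graph_s G v
  | Lop_ns v => graph_ns G v
  end.

Fixpoint apply_lops (V : finType) (G : lgraph V) (s : seq (lop V)) : lgraph V :=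
  match s with
  | [::] => G
  | o :: s' => apply_lops (apply_lop o G) s'
  end.

Definition swap_kind (a b : kind) (k : kind) : kind :=
  if k == a then b else if k == b then a else k.

(* The isomorphism M[IAS(G)] -> M[IAS(G')] induced by one operation. *)
Definition lop_map (V : finType) (G : lgraph V) (o : lop V) (w : elt V) : elt V :=
  let: (x, k) := w in
  match o with
  | Lop_l v => (x, if x == v then swap_kind Chi Psi k else k)
  | Lop_ns v =>
      (x, if x == v then
            (if lloop G v then swap_kind Phi Chi k else swap_kind Phi Psi k)
          else k)
  | Lop_s v =>
      (x, if x == v then
            (if lloop G v then swap_kind Phi Chi k else swap_kind Phi Psi k)
          else if ladj G v x then swap_kind Chi Psi k else k)
  end.

Fixpoint induced_map (V : finType) (G : lgraph V) (s : seq (lop V)) : elt V -> elt V :=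
  match s with
  | [::] => id
  | o :: s' => fun w => induced_map (apply_lop o G) s' (lop_map G o w)
  end.

(* Main.v *)
Require Import Defs.
From HB Require Import structures.
From mathcomp Require Import all_boot all_order all_algebra.
Import GRing.Theory.
Local Open Scope ring_scope.
Set Implicit Arguments. Unset Strict Implicit.

Definition keqb (a b : kind) := match a, b with Phi,Phi|Chi,Chi|Psi,Psi => true | _,_ => false end.
Lemma kind_eqE a b : (a == b) = keqb a b.
Proof. case: a; case: b => //=; try (by rewrite eqxx); apply/eqP => /(f_equal kind_to)/(f_equal val); rewrite /= !inordK //. Qed.

Lemma swap_kindK a b : involutive (swap_kind a b).
Proof. by case: a; case: b; case; rewrite /swap_kind !kind_eqE. Qed.

Lemma lop_map_fst (V : finType) (G : lgraph V) o w : (lop_map G o w).1 = w.1.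
Proof. by case: w => x k; case: o. Qed.

Lemma lop_map_inj (V : finType) (G : lgraph V) o : injective (lop_map G o).
Proof.
move=> [x k] [x' k']; case: o => v /= [<-]; repeat case: ifP => _;
  by [move=> -> | move/(can_inj (swap_kindK _ _)) ->].
Qed.

Definition amatb (V : finType) (G : lgraph V) (y x : V) :=
  if y == x then lloop G x else ladj G y x.
Definition colb (V : finType) (G : lgraph V) (w : elt V) (y : V) : bool :=
  match w.2 with
  | Phi => y == w.1
  | Chi => amatb G y w.1
  | Psi => amatb G y w.1 (+) (y == w.1)
  end.

Lemma F2_add (a b : bool) : (a%:R + b%:R : 'F_2) = (a (+) b)%:R.
Proof. by case: a; case: b; apply/val_inj. Qed.
Lemma F2_mul (a b : bool) : (a%:R * b%:R : 'F_2) = (a && b)%:R.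
Proof. by case: a; case: b; apply/val_inj. Qed.

Lemma ias_colE (V : finType) (G : lgraph V) w y : ias_col G w y = (colb G w y)%:R.
Proof. by rewrite /ias_col /colb /amat; case: w.2; rewrite ?F2_add. Qed.

Ltac eqsplit := repeat match goal with
 | H : is_true (?a != ?b) |- context [?b == ?a] => rewrite (eq_sym b a) (negbTE H)
 | H : is_true (?a != ?b) |- context [?a == ?b] => rewrite (negbTE H)
 | |- context [?a == ?a] => rewrite eqxx
 | |- context [?a == ?b] => case: (eqVneq a b) => [?|?]; subst
 end.

Ltac atomsplit := rewrite ?ladj_irr'; repeat match goal with
 | |- context [ladj ?G ?a ?b] => let E := fresh in case E: (ladj G a b); rewrite ?(ladj_sym' G b a) ?E
 | |- context [lloop ?G ?a] => case: (lloop G a)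
 end.

Lemma col_map (V : finType) (G : lgraph V) o : exists v (a : V -> bool), a v = false /\
  forall w y, colb (apply_lop o G) (lop_map G o w) y = colb G w y (+) (colb G w v && a y).
Proof.
case: o => v.
- exists v, (fun _ => false); split => // -[x k] y.
  rewrite andbF addbF /colb /amatb /=; case: k; rewrite /swap_kind !kind_eqE /=;
  eqsplit; atomsplit; done.
- exists v, (ladj G v); split; first exact: ladj_irr'.
  move=> [x k] y; rewrite /colb /amatb /= /s_adj; case: k; rewrite /swap_kind !kind_eqE /=;
  eqsplit; atomsplit; done.
- exists v, (ladj G v); split; first exact: ladj_irr'.
  move=> [x k] y; rewrite /colb /amatb /= /s_adj; case: k; rewrite /swap_kind !kind_eqE /=;
  eqsplit; atomsplit; done.
Qed.

Lemma indep_step (V : finType) (G : lgraph V) o J :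
  ias_indep G J -> ias_indep (apply_lop o G) (lop_map G o @: J).
Proof.
move=> HJ c Hc w' /imsetP [w wJ ->].
have [v [a [av Hcol]]] := col_map G o.
pose S y := \sum_(u in J) c (lop_map G o u) * ias_col G u y.
have HS y : S y + S v * (a y)%:R = 0.
  have := Hc y; rewrite big_imset /=; last by move=> ? ? _ _; exact: lop_map_inj.
  move=> <-; rewrite /S mulr_suml -big_split /=; apply: eq_bigr => u _.
  by rewrite !ias_colE Hcol -F2_add -F2_mul mulrDr mulrA.
have av' : (a v)%:R = 0 :> 'F_2 by rewrite av.
have Sv : S v = 0 by have := HS v; rewrite av' mulr0 addr0.
have S0 y : S y = 0 by have := HS y; rewrite Sv mul0r addr0.
exact: (HJ (fun u => c (lop_map G o u)) S0 w wJ).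
Qed.

Lemma induced_cat (V : finType) (G : lgraph V) s1 s2 w :
  induced_map G (s1 ++ s2) w = induced_map (apply_lops G s1) s2 (induced_map G s1 w).
Proof. by elim: s1 G w => //= o s1 IH G w; exact: IH. Qed.

Lemma induced_fst (V : finType) (G : lgraph V) s w : (induced_map G s w).1 = w.1.
Proof. by elim: s G w => //= o s IH G w; rewrite IH lop_map_fst. Qed.

Lemma indep_seq (V : finType) (G : lgraph V) s J :
  ias_indep G J -> ias_indep (apply_lops G s) (induced_map G s @: J).
Proof.
elim: s G J => [|o s IH] G J HJ /=; first by rewrite imset_id.
have := IH _ _ (@indep_step _ _ o _ HJ).
by rewrite -(imset_comp (induced_map (apply_lop o G) s) (lop_map G o)).
Qed.

Lemma st_uniq (V : finType) (J : {set elt V}) : subtransversal J ->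
  forall w1 w2, w1 \in J -> w2 \in J -> w1.1 = w2.1 -> w1 = w2.
Proof.
move=> H w1 w2 h1 h2 e; apply/eqP; apply: contraLR (H w1.1) => ne; rewrite -ltnNge.
have : [set w1; w2] \subset [set w in J | w.1 == w1.1].
  by apply/subsetP => z; rewrite !inE => /orP[]/eqP->; rewrite ?h1 ?h2 ?e eqxx.
by move/subset_leq_card; rewrite cards2 ne.
Qed.

Lemma st_seq (V : finType) (G : lgraph V) s J :
  subtransversal J -> subtransversal (induced_map G s @: J).
Proof.
move=> H v; apply: leq_trans (H v).
have : [set w in induced_map G s @: J | w.1 == v] \subset
       induced_map G s @: [set w in J | w.1 == v].
  apply/subsetP => z; rewrite inE => /andP[/imsetP[w wJ ->]] e.
  by apply: imset_f; rewrite inE wJ -(induced_fst G s w) e.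
move/subset_leq_card => h; exact: leq_trans h (leq_imset_card _ _).
Qed.

Definition bad (V : finType) (J : {set elt V}) := [set w in J | w.2 != Phi].

Lemma bad_image (V : finType) (G : lgraph V) s (J : {set elt V}) w0 : w0 \in J -> w0.2 != Phi ->
  (induced_map G s w0).2 = Phi ->
  (forall w, w \in J -> w.2 = Phi -> (induced_map G s w).2 = Phi) ->
  (#|bad (induced_map G s @: J)| < #|bad J|)%N.
Proof.
move=> w0J nz0 f0 HP.
have sub : bad (induced_map G s @: J) \subset
           induced_map G s @: [set w in J | (induced_map G s w).2 != Phi].
  apply/subsetP => z; rewrite inE => /andP[/imsetP[w wJ ->] nz].
  by apply: imset_f; rewrite inE wJ nz.
apply: leq_ltn_trans (subset_leq_card sub) _.
apply: leq_ltn_trans (leq_imset_card _ _) _.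
apply: proper_card; apply/properP; split.
  apply/subsetP => w; rewrite !inE => /andP[wJ nz]; rewrite wJ /=.
  by apply: contra nz => /eqP e; apply/eqP; exact: HP wJ e.
by exists w0; rewrite !inE ?w0J ?nz0 // f0 eqxx andbF.
Qed.

Lemma step (V : finType) (G : lgraph V) (J : {set elt V}) v k :
  subtransversal J -> ias_indep G J -> (v, k) \in J -> k != Phi ->
  exists s1, (induced_map G s1 (v, k)).2 = Phi /\
    forall w, w \in J -> w.2 = Phi -> (induced_map G s1 w).2 = Phi.
Proof.
move=> Hst Hind w0J kP.
have others : forall w, w \in J -> w.2 = Phi -> w.1 != v.
  move=> [x k'] wJ /= e; apply/eqP => xv; subst x k'.
  have := st_uniq Hst wJ w0J erefl; case=> e.
  by move: kP; rewrite -e eqxx.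
case Hg: ((k == Chi) == lloop G v).
- exists [:: Lop_ns v]; split.
  + clear w0J; rewrite /= eqxx; move: kP Hg; case: k; case: (lloop G v);
      rewrite /swap_kind !kind_eqE //=.
  + move=> [x k'] wJ /= e; have := others _ wJ e; rewrite /= => xv.
    by rewrite (negbTE xv).
- have hcol : forall y, colb G (v, k) y = ladj G v y.
    move=> y; clear w0J; rewrite /colb /amatb /=.
    case: (eqVneq y v) => [->|yv]; [rewrite ladj_irr' | rewrite ladj_sym'];
    move: kP Hg; case: k; case: (lloop G v); rewrite !kind_eqE ?addbF //=.
  have [u /andP[vu uJ]] : exists u, ladj G v u && ((u, Phi) \notin J).
    apply/existsP; apply: contraT; rewrite negb_exists => /forallP Hall.
    pose c (w : elt V) : 'F_2 := ((w == (v, k)) || ((w.2 == Phi) && ladj G v w.1))%:R.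
    suff : c (v, k) = 0 by rewrite /c eqxx /= => /eqP; rewrite oner_eq0.
    apply: (Hind c _ (v, k) w0J) => y.
    rewrite (bigD1 (v, k)) //= {1}/c eqxx /= mul1r ias_colE hcol.
    have term : forall w, w != (v, k) ->
        c w * ias_col G w y = ((w == (y, Phi)) && ladj G v y)%:R.
      move=> [x k'] ne; rewrite /c (negbTE ne) /= ias_colE F2_mul; congr (_%:R).
      rewrite /colb /= xpair_eqE.
      case: k' ne; rewrite !kind_eqE /= ?andbF //= => _.
      by case: (eqVneq x y) => [->|xy]; rewrite ?andbT ?andbF.
    have rest : \sum_(w in J | w != (v, k)) c w * ias_col G w y = (ladj G v y)%:R.
      under eq_bigr => w /andP[_ ne] do rewrite term //.
      case E: (ladj G v y).
      * have yJ : (y, Phi) \in J by have := Hall y; rewrite E /= negbK.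
        rewrite (bigD1 (y, Phi)) /=; last first.
          rewrite yJ /=; apply/eqP => -[_ e]; by move: kP; rewrite -e eqxx.
        rewrite eqxx big1 ?addr0 // => w /andP[_ ne]; by rewrite (negbTE ne).
      * by rewrite big1 // => w _; rewrite andbF.
    by rewrite rest F2_add addbb.
  have uv : u != v by apply: contraTneq vu => ->; rewrite ladj_irr'.
  exists [:: Lop_ns u; Lop_ns v]; split.
  + clear w0J hcol; rewrite /= eq_sym (negbTE uv) /= eqxx ladj_sym' vu.
    move: kP Hg; case: k; case: (lloop G v); rewrite /swap_kind !kind_eqE //=.
  + move=> [x k'] wJ /= e; subst k'.
    have xv := others _ wJ erefl.
    have xu : x != u by apply: contraNneq uJ => <-.
    by rewrite /= (negbTE xu) /= (negbTE xv).
Qed.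

Lemma main (V : finType) n (G : lgraph V) (J : {set elt V}) :
  subtransversal J -> ias_indep G J -> (#|bad J| <= n)%N ->
  exists s : seq (lop V), forall w, w \in J -> (induced_map G s w).2 = Phi.
Proof.
elim: n G J => [|n IH] G J Hst Hind Hn; case: (set_0Vmem (bad J)) => [E | [[v k] w0b]].
- exists [::] => w wJ /=; apply/eqP; apply: contraT => nz.
  have : w \in bad J by rewrite inE wJ nz.
  by rewrite E inE.
- by move: Hn; rewrite leqn0 cards_eq0 => /eqP E; rewrite E inE in w0b.
- exists [::] => w wJ /=; apply/eqP; apply: contraT => nz.
  have : w \in bad J by rewrite inE wJ nz.
  by rewrite E inE.
- move: w0b; rewrite inE => /andP[w0J kP].
  have [s1 [H1 H2]] := step Hst Hind w0J kP.
  have lt := bad_image w0J kP H1 H2.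
  have [s2 Hs2] := IH (apply_lops G s1) (induced_map G s1 @: J)
    (st_seq G s1 Hst) (@indep_seq _ G s1 J Hind) (leq_trans lt Hn).
  exists (s1 ++ s2) => w wJ; rewrite induced_cat; apply: Hs2; exact: imset_f.
Qed.

Unset Implicit Arguments.
Theorem proposition4p1 (V : finType) (G : lgraph V) (J : {set elt V}) :
  subtransversal J -> ias_indep G J ->
  exists s : seq (lop V),
    forall w, w \in J -> (induced_map G s w).2 = Phi.
Proof. move=> Hst Hind; exact: (main (n := #|bad J|) Hst Hind (leqnn _)). Qed.
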